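(* Let $n\ge 2$, $N=2^n$, $s=(N-1)/2$. Consider the unrestricted close Hadamard problem: given oracle access (via $\hat U_z$) to a string $z\in C=A\cup B$, where $A=\Xi^{(N)}_{N/2-1}$ and $B=\bigcup_{k=0}^{N/2-2}\Xi^{(N)}_k$, decide whether $z\in A$ or $z\in B$. For every $\delta>0$ there is a number $q$ depending only on $\delta$ (not on $n$) and a quantum algorithm making $q$ queries to $\hat U_z$ that, for every $z\in C$, decides correctly with error probability at most $\delta$; the algorithm consists of $q$ independent runs of the circuit that prepares $\tfrac1{\sqrt2}(|\tfrac12\rangle_s+|-\tfrac12\rangle_s)$, applies $\hat H^{\otimes n}$, $\hat U_z$, $\hat H^{\otimes n}$ (followed by a fixed $z$-independent unitary) and measures in the spin basis, together with classical post-processing of the outcomes.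
   Context: Work in $\mathbb{C}^N$ with computational basis $\{|y\rangle : y=0,\dots,N-1\}$; spin basis states $|m\rangle_s$, $m\in\{-s,\dots,s\}$, are identified via $|m\rangle_s=|m+s\rangle$. For $x,y\in\{0,\dots,N-1\}$, $x\cdot y\in\{0,1\}$ is the mod-2 inner product of their $n$-bit binary expansions; $\hat H^{\otimes n}|y\rangle=N^{-1/2}\sum_x(-1)^{x\cdot y}|x\rangle$. The Hadamard codeword $W^{(N)}_j\in\{0,1\}^N$ has bit $x\cdot j$ at position $x$. For $z\in\{0,1\}^N$ the oracle is the diagonal unitary $\hat U_z|x\rangle=(-1)^{z_x}|x\rangle$; a query is one application of $\hat U_z$. The set $\Xi^{(N)}_j$ (codewords with unrestricted errors) consists of all strings $z\in\{0,1\}^N$ at Hamming distance strictly less than $N/16$ from $W^{(N)}_j$. *)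

(* Defs.v *)
From HB Require Import structures.
From mathcomp Require Import all_boot all_order all_algebra.
From mathcomp Require Import complex.
From mathcomp Require Import Rstruct.
From Stdlib Require Rdefinitions.
Unset Printing Implicit Defensive.
Import Order.TTheory GRing.Theory Num.Theory.
Local Open Scope ring_scope.
Local Open Scope complex_scope.

Notation RR := Rdefinitions.R.
Notation CC := (complex RR).

Definition Ndim (n : nat) : nat := (2 ^ n)%N.

Definition bdot (n x y : nat) : bool :=
  odd (\sum_(i < n) (odd (x %/ 2 ^ i) && odd (y %/ 2 ^ i)))%N.

Definition codeword (n : nat) (j : nat) : {ffun 'I_(Ndim n) -> bool} :=
  [ffun x : 'I_(Ndim n) => bdot n x j].

Definition hamming (n : nat) (z w : {ffun 'I_(Ndim n) -> bool}) : nat :=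
  #|[set x | z x != w x]|.

Definition Xi (n j : nat) : {set {ffun 'I_(Ndim n) -> bool}} :=
  [set z | (16 * hamming n z (codeword n j) < Ndim n)%N].

Definition hadA (n : nat) := Xi n (Ndim n %/ 2 - 1)%N.
Definition hadB (n : nat) := \bigcup_(k < (Ndim n %/ 2 - 1)%N) Xi n k.
Definition hadC (n : nat) := hadA n :|: hadB n.

Definition hadamard (n : nat) : 'M[CC]_(Ndim n) :=
  \matrix_(x, y) ((-1) ^+ bdot n x y / (Num.sqrt ((Ndim n)%:R : RR))%:C).

Definition oracle (n : nat) (z : {ffun 'I_(Ndim n) -> bool}) : 'M[CC]_(Ndim n) :=
  diag_mx (\row_x ((-1) ^+ z x)).

(* initial state (|1/2>_s + |-1/2>_s)/sqrt 2, with |m>_s = |m+s>, s=(N-1)/2: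
   i.e. (|N/2> + |N/2 - 1>)/sqrt 2 *)
Definition psi0 (n : nat) : 'cV[CC]_(Ndim n) :=
  \col_y
    (if ((y : nat) == (Ndim n %/ 2)%N) || ((y : nat) == (Ndim n %/ 2 - 1)%N)
     then 1 / (Num.sqrt (2%:R : RR))%:C else 0).

Definition unitary (m : nat) (V : 'M[CC]_m) : Prop :=
  V *m (map_mx (@conjc RR) V)^T = 1%:M.

Definition out_state (n : nat) (V : 'M[CC]_(Ndim n))
  (z : {ffun 'I_(Ndim n) -> bool}) : 'cV[CC]_(Ndim n) :=
  V *m (hadamard n *m (oracle n z *m (hadamard n *m psi0 n))).

(* Born probability of outcome y (spin basis = computational basis up to relabeling) *)
Definition outcome_prob (n : nat) (V : 'M[CC]_(Ndim n))
  (z : {ffun 'I_(Ndim n) -> bool}) (y : 'I_(Ndim n)) : RR :=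
  let a := out_state n V z y 0 in (complex.Re a) ^+ 2 + (complex.Im a) ^+ 2.

Definition success_prob (n q : nat) (V : 'M[CC]_(Ndim n))
  (f : {ffun 'I_q -> 'I_(Ndim n)} -> bool)
  (z : {ffun 'I_(Ndim n) -> bool}) (b : bool) : RR :=
  \sum_(ys : {ffun 'I_q -> 'I_(Ndim n)} | f ys == b)
     \prod_(i < q) outcome_prob n V z (ys i).

(* Main.v *)
Require Import Defs.
From mathcomp Require Import all_boot all_order all_algebra.
From mathcomp Require Import complex Rstruct.
From mathcomp Require Import ring lra zify.
Import Order.TTheory GRing.Theory Num.Theory.
Local Open Scope ring_scope.
Lemma bdotS n x y : bdot n.+1 x y = (odd x && odd y) (+) bdot n x./2 y./2.
Proof.
rewrite /bdot big_ord_recl /= expn0 !divn1 oddD; congr (_ (+) odd _).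
  by case: (odd x && odd y).
apply: eq_bigr => i _; rewrite /bump /= add1n expnS !divnMA !divn2 //.
Qed.

Lemma bdot0l n y : bdot n 0 y = false.
Proof. by rewrite /bdot big1 // => i _; rewrite div0n. Qed.

Lemma sum_double (R : nmodType) (F : nat -> R) m :
  \sum_(0 <= x < m.*2) F x = \sum_(0 <= x < m) (F x.*2 + F x.*2.+1).
Proof.
elim: m => [|m IH]; first by rewrite !big_geq.
rewrite doubleS !big_nat_recr //= IH addrA.
done.
Qed.

Definition sg (b : bool) : RR := (-1) ^+ b.

Lemma Gsum n a b : (a < 2 ^ n)%N -> (b < 2 ^ n)%N ->
  \sum_(0 <= x < 2 ^ n) sg (bdot n x a) * sg (bdot n x b) =
  if a == b then (2 ^ n)%:R else 0.
Proof.
elim: n a b => [|n IH] a b.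
  rewrite expn0 => ha hb; have -> : a = 0%N by lia.
  have -> : b = 0%N by lia.
  by rewrite big_nat1 /sg bdot0l /= mulr1.
move=> ha hb.
rewrite expnS mul2n sum_double.
have ha' : (a./2 < 2 ^ n)%N.
  by rewrite -divn2 ltn_divLR // muln2 -mul2n -expnS.
have hb' : (b./2 < 2 ^ n)%N.
  by rewrite -divn2 ltn_divLR // muln2 -mul2n -expnS.
under eq_bigr => x _ do rewrite !bdotS /= odd_double /= uphalf_double half_double.
under eq_bigr => x _ do rewrite /sg !signr_addb -/(sg _) -/(sg _) -/(sg (odd b)) -/(sg (odd a)).
rewrite (eq_bigr (fun x => (1 + sg (odd a) * sg (odd b)) * (sg (bdot n x a./2) * sg (bdot n x b./2)))); last first.
  by move=> x _; ring.
rewrite -mulr_sumr IH //.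
have Ea := odd_double_half a; have Eb := odd_double_half b.
case: (eqVneq a./2 b./2) => h2.
  case: (eqVneq (odd a) (odd b)) => h1.
    have -> : a == b by apply/eqP; rewrite -Ea -Eb h1 h2.
    rewrite -mul2n natrM /sg h1 -expr2 sqrr_sign; ring.
  have -> : (a == b) = false by apply/negbTE; apply: contra_neq h1 => ->.
  move: h1; rewrite /sg; case: (odd a); case: (odd b) => //= _; rewrite ?expr0 ?expr1; ring.
have -> : (a == b) = false by apply/negbTE; apply: contra_neq h2 => ->.
by rewrite mulr0.
Qed.
Local Open Scope complex_scope.

Definition Nr n : RR := (Ndim n)%:R.
Definition hr n (x y : nat) : RR := sg (bdot n x y) / Num.sqrt (Nr n).
Definition Hr n : 'M[RR]_(Ndim n) := \matrix_(x, y) hr n x y.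
Definition Ur n (z : {ffun 'I_(Ndim n) -> bool}) : 'M[RR]_(Ndim n) :=
  diag_mx (\row_x sg (z x)).
Definition r2 : RR := 1 / Num.sqrt (2%:R : RR).
Definition psir n : 'cV[RR]_(Ndim n) :=
  \col_y (if ((y : nat) == (Ndim n %/ 2)%N) || ((y : nat) == (Ndim n %/ 2 - 1)%N)
     then r2 else 0).
Definition vr n z : 'cV[RR]_(Ndim n) := Hr n *m (Ur n z *m (Hr n *m psir n)).

Lemma out_stateE n z : out_state n 1 z = map_mx (real_complex RR) (vr n z).
Proof.
have eH : hadamard n = map_mx (real_complex RR) (Hr n).
  apply/matrixP => i j; rewrite !mxE /hr /sg rmorphM rmorph_sign fmorphV //.
have eU : oracle n z = map_mx (real_complex RR) (Ur n z).
  apply/matrixP => i j; rewrite !mxE rmorphMn /sg rmorph_sign.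
  by [].
have eP : psi0 n = map_mx (real_complex RR) (psir n).
  apply/matrixP => i j; rewrite !mxE /r2; case: ifP => _; last by [].
  by rewrite rmorphM rmorph1 fmorphV.
by rewrite /out_state /vr mul1mx eH eU eP !map_mxM.
Qed.

Lemma outcome_probE n z y : outcome_prob n 1 z y = (vr n z y 0) ^+ 2.
Proof.
rewrite /outcome_prob out_stateE mxE /=.
by rewrite expr0n /= addr0.
Qed.
Lemma sumsq (m : nat) (v : 'cV[RR]_m) : \sum_i (v i 0) ^+ 2 = (v^T *m v) 0 0.
Proof. by rewrite mxE; apply: eq_bigr => i _; rewrite mxE expr2. Qed.

Lemma orth_pres m (A : 'M[RR]_m) (v : 'cV[RR]_m) :
  A^T *m A = 1%:M -> (A *m v)^T *m (A *m v) = v^T *m v.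
Proof. by move=> h; rewrite trmx_mul mulmxA -(mulmxA _ _ A) h mulmx1. Qed.

Lemma Nr_gt0 n : 0 < Nr n.
Proof. by rewrite /Nr ltr0n /Ndim expn_gt0. Qed.

Lemma sqrtN2 n : Num.sqrt (Nr n) ^+ 2 = Nr n.
Proof. by rewrite sqr_sqrtr // ltW // Nr_gt0. Qed.

Lemma sum_ord_nat n (F : nat -> RR) :
  \sum_(x < Ndim n) F x = \sum_(0 <= x < 2 ^ n) F x.
Proof. by rewrite -(big_mkord xpredT). Qed.

Lemma Hr_orth n : (Hr n)^T *m Hr n = 1%:M.
Proof.
apply/matrixP => i j; rewrite !mxE.
under eq_bigr => x _ do rewrite !mxE /hr.
rewrite (eq_bigr (fun x : 'I_(Ndim n) => (sg (bdot n x i) * sg (bdot n x j)) / Nr n)); last first.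
  move=> x _; have := Nr_gt0 n; rewrite -sqrtr_gt0 => h.
  have e := sqrtN2 n; set s := Num.sqrt (Nr n) in h e *.
  rewrite -e; by field; rewrite gt_eqF.
rewrite -mulr_suml (sum_ord_nat n (fun x => sg (bdot n x i) * sg (bdot n x j))).
rewrite Gsum ?ltn_ord //.
have hN : Nr n != 0 by rewrite gt_eqF // Nr_gt0.
case: (eqVneq i j) => [->|h].
  by rewrite eqxx /= mulfV.
by rewrite (negbTE (_ : (i:nat) != j)) ?mul0r.
Qed.

Lemma Ur_orth n z : (Ur n z)^T *m Ur n z = 1%:M.
Proof.
rewrite /Ur tr_diag_mx mulmx_diag; apply/matrixP => i j; rewrite !mxE.
by rewrite /sg -expr2 sqrr_sign.
Qed.
Lemma sum_if1 M k (a : RR) : (k < M)%N ->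
  \sum_(y < M) (if (y : nat) == k then a else 0) = a.
Proof.
move=> hk; rewrite (bigD1 (Ordinal hk)) //= eqxx big1 ?addr0 // => y hy.
rewrite ifN //; apply: contra hy => /eqP e; apply/eqP/val_inj.
Qed.

Lemma half_N n : (1 <= n)%N -> (Ndim n %/ 2 = 2 ^ n.-1)%N.
Proof. by case: n => // n _; rewrite /Ndim expnS mulKn. Qed.

Lemma r2sq : r2 ^+ 2 = 1 / 2.
Proof.
have h : 0 < Num.sqrt (2%:R : RR) by rewrite sqrtr_gt0 ltr0n.
have e : Num.sqrt (2%:R : RR) ^+ 2 = 2 by rewrite sqr_sqrtr // ler0n.
rewrite /r2; set s := Num.sqrt _ in h e *.
by rewrite expr_div_n e expr1n.
Qed.

Lemma psi_norm n : (1 <= n)%N -> \sum_y (psir n y 0) ^+ 2 = 1.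
Proof.
move=> hn; have hc := half_N n hn.
have c0 : (0 < 2 ^ n.-1)%N by rewrite expn_gt0.
have cN : (2 ^ n.-1 < Ndim n)%N.
  by rewrite /Ndim ltn_exp2l //; lia.
rewrite (eq_bigr (fun y : 'I_(Ndim n) =>
   (if (y : nat) == (2 ^ n.-1)%N then r2 ^+ 2 else 0) +
   (if (y : nat) == (2 ^ n.-1 - 1)%N then r2 ^+ 2 else 0))); last first.
  move=> y _; rewrite mxE hc.
  case: (eqVneq (y : nat) (2 ^ n.-1)%N) => [e|e] /=.
    by rewrite ifN ?addr0 // e; lia.
  case: ifP => _ //; rewrite ?expr0n ?add0r //.
rewrite big_split /= !sum_if1 ?r2sq //; last by lia.
by field.
Qed.

Lemma total_prob n z : (1 <= n)%N -> \sum_y outcome_prob n 1 z y = 1.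
Proof.
move=> hn.
under eq_bigr => y _ do rewrite outcome_probE.
rewrite sumsq /vr !orth_pres ?Hr_orth ?Ur_orth // -sumsq psi_norm //.
Qed.
Definition sx n (x : nat) : RR :=
  sg (bdot n x (2 ^ n.-1)) + sg (bdot n x (2 ^ n.-1 - 1)).

Lemma v00 n z (i0 : 'I_(Ndim n)) : (1 <= n)%N -> (i0 : nat) = 0%N ->
  vr n z i0 0 = r2 / Nr n * \sum_(x < Ndim n) sg (z x) * sx n x.
Proof.
move=> hn hi0; have hc := half_N n hn.
have c0 : (0 < 2 ^ n.-1)%N by rewrite expn_gt0.
have cN : (2 ^ n.-1 < Ndim n)%N by rewrite /Ndim ltn_exp2l //; lia.
rewrite /vr mxE mulr_sumr; apply: eq_bigr => x _.
rewrite mxE /Ur mul_diag_mx mxE mxE mxE /hr hi0 bdot0l.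
have -> : \sum_j Hr n x j * psir n j 0 = r2 * (hr n x (2 ^ n.-1) + hr n x (2 ^ n.-1 - 1)).
  rewrite (eq_bigr (fun y : 'I_(Ndim n) =>
   (if (y : nat) == (2 ^ n.-1)%N then r2 * hr n x (2 ^ n.-1) else 0) +
   (if (y : nat) == (2 ^ n.-1 - 1)%N then r2 * hr n x (2 ^ n.-1 - 1) else 0))); last first.
    move=> y _; rewrite !mxE hc.
    case: eqP => [e1|_]; case: eqP => [e2|_] /=.
    - exfalso; move: c0; rewrite -[X in (0 < X)%N]e1 e2.
      by set t := (2 ^ n.-1)%N; lia.
    - by rewrite e1 addr0 mulrC.
    - by rewrite e2 add0r mulrC.
    - by rewrite mulr0 addr0.
  rewrite big_split /= !sum_if1 //; last by lia.
  by rewrite mulrDr.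
rewrite /hr /sx (_ : sg false = 1) //.
have := Nr_gt0 n; rewrite -sqrtr_gt0 => h.
have e := sqrtN2 n; set s := Num.sqrt (Nr n) in h e *.
set a := sg (bdot n x _); set b := sg (bdot n x _).
rewrite -e; field; by rewrite gt_eqF.
Qed.
From mathcomp Require Import all_boot all_order all_algebra.
From mathcomp Require Import complex Rstruct.
From mathcomp Require Import ring lra zify.
Import Order.TTheory GRing.Theory Num.Theory.
Local Open Scope ring_scope.
Lemma sx_le2 n x : `|sx n x| <= 2.
Proof. rewrite /sx /sg. case: (bdot n x (2 ^ n.-1)); case: (bdot n x (2 ^ n.-1 - 1)); rewrite ?expr0 ?expr1 ?normrN; by rewrite ler_norml; apply/andP; split; lra. Qed.

Lemma err_bound n (z w : {ffun 'I_(Ndim n) -> bool}) :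
  `| \sum_x sg (z x) * sx n x - \sum_x sg (w x) * sx n x |
     <= 4 * (hamming n z w)%:R.
Proof.
rewrite -sumrB.
apply: le_trans (ler_norm_sum _ _ _) _.
apply: le_trans (_ : \sum_x (if z x != w x then 4 else 0) <= _).
  apply: ler_sum => x _; rewrite -mulrBl normrM.
  have h := sx_le2 n x.
  case: (z x); case: (w x); rewrite /sg /= ?expr0 ?expr1 ?subrr ?normr0 ?mul0r //.
    rewrite (_ : -1 - 1 = - 2 :> RR); last by ring.
    rewrite normrN ger0_norm; [lra | lra].
  rewrite (_ : 1 - -1 = 2 :> RR); last by ring.
  rewrite ger0_norm; [lra | lra].
rewrite -big_mkcond /= (eq_bigl (fun x => x \in [set x | z x != w x])); last first.
  by move=> x; rewrite inE.
by rewrite sumr_const /hamming mulr_natr.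
Qed.
Lemma Gterm n k : (1 <= n)%N -> (k < Ndim n)%N ->
  \sum_(x < Ndim n) sg (bdot n x k) * sx n x =
  (if k == (2 ^ n.-1)%N then Nr n else 0) + (if k == (2 ^ n.-1 - 1)%N then Nr n else 0).
Proof.
move=> hn hk.
have c0 : (0 < 2 ^ n.-1)%N by rewrite expn_gt0.
have cN : (2 ^ n.-1 < Ndim n)%N by rewrite /Ndim ltn_exp2l //; lia.
rewrite /sx; under eq_bigr => x _ do rewrite mulrDr.
rewrite big_split /=.
rewrite (sum_ord_nat n (fun x => sg (bdot n x k) * sg (bdot n x (2 ^ n.-1)))).
rewrite (sum_ord_nat n (fun x => sg (bdot n x k) * sg (bdot n x (2 ^ n.-1 - 1)))).
rewrite !Gsum //; last by move: cN; rewrite /Ndim; lia.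
Qed.

Lemma codewordE n k x : codeword n k x = bdot n x k.
Proof. by rewrite ffunE. Qed.

Lemma ampl n z k (i0 : 'I_(Ndim n)) : (1 <= n)%N -> (i0 : nat) = 0%N ->
  (16 * hamming n z (codeword n k) < Ndim n)%N -> (k < Ndim n)%N ->
  exists t : RR, outcome_prob n 1 z i0 = t ^+ 2 / 2 /\
   `| t - ((if k == (2 ^ n.-1)%N then 1 else 0) + (if k == (2 ^ n.-1 - 1)%N then 1 else 0)) | < 1/4.
Proof.
move=> hn hi0 hd hk.
set S := \sum_x sg (z x) * sx n x.
exists (S / Nr n); split.
  rewrite outcome_probE v00 // -/S.
  rewrite (_ : (r2 / Nr n * S)^+2 = r2^+2 * (S / Nr n)^+2); last by ring.
  rewrite r2sq; ring.
have e := err_bound n z (codeword n k).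
have eW : \sum_(x < Ndim n) sg (codeword n k x) * sx n x = \sum_(x < Ndim n) sg (bdot n x k) * sx n x.
  by apply: eq_bigr => x _; rewrite codewordE.
rewrite eW Gterm // -/S in e.
have hD := Nr_gt0 n.
have hd' : 16 * (hamming n z (codeword n k))%:R < Nr n.
  by rewrite /Nr -(ltr_nat RR) natrM in hd.
set d := (hamming n z (codeword n k))%:R in e hd'.
set a := (if k == (2 ^ n.-1)%N then 1 else 0) + (if k == (2 ^ n.-1 - 1)%N then 1 else 0) : RR.
have ea : (if k == (2 ^ n.-1)%N then Nr n else 0) + (if k == (2 ^ n.-1 - 1)%N then Nr n else 0) = a * Nr n.
  by rewrite /a; case: ifP; case: ifP => _ _; ring.
rewrite ea in e.
have -> : S / Nr n - a = (S - a * Nr n) / Nr n by field; rewrite gt_eqF.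
rewrite normrM normfV (gtr0_norm hD) ltr_pdivrMr //.
have d0 : 0 <= d by rewrite /d ler0n.
lra.
Qed.
Lemma probA n z (i0 : 'I_(Ndim n)) : (1 <= n)%N -> (i0 : nat) = 0%N ->
  z \in hadA n -> 9/32 <= outcome_prob n 1 z i0.
Proof.
move=> hn hi0; rewrite /hadA /Xi inE half_N // => hd.
have c0 : (0 < 2 ^ n.-1)%N by rewrite expn_gt0.
have cN : (2 ^ n.-1 < Ndim n)%N by rewrite /Ndim ltn_exp2l //; lia.
have hk : (2 ^ n.-1 - 1 < Ndim n)%N by lia.
have [t [-> ht]] := ampl n z _ i0 hn hi0 hd hk.
move: ht; rewrite eqxx ifN; last by rewrite neq_ltn; apply/orP; left; lia.
rewrite add0r ltr_norml => /andP [h1 h2].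
nra.
Qed.

Lemma probB n z (i0 : 'I_(Ndim n)) : (1 <= n)%N -> (i0 : nat) = 0%N ->
  z \in hadB n -> outcome_prob n 1 z i0 <= 1/32.
Proof.
move=> hn hi0 /bigcupP [k _]; rewrite /Xi inE => hd.
have c0 : (0 < 2 ^ n.-1)%N by rewrite expn_gt0.
have cN : (2 ^ n.-1 < Ndim n)%N by rewrite /Ndim ltn_exp2l //; lia.
have hk0 : (k < 2 ^ n.-1 - 1)%N by rewrite -half_N // ltn_ord.
have hk : (k < Ndim n)%N by lia.
have [t [-> ht]] := ampl n z _ i0 hn hi0 hd hk.
move: ht; rewrite ifN; last by rewrite neq_ltn; apply/orP; left; lia.
rewrite ifN; last by rewrite neq_ltn; apply/orP; left; lia.
rewrite addr0 subr0 ltr_norml => /andP [h1 h2].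
nra.
Qed.
Lemma prod_sum (Y : finType) q (F : Y -> RR) :
  \sum_(ys : {ffun 'I_q -> Y}) \prod_i F (ys i) = (\sum_y F y) ^+ q.
Proof.
by rewrite -(bigA_distr_bigA (fun (i : 'I_q) (y : Y) => F y)) /= prodr_const card_ord.
Qed.

Lemma markov (X : finType) (Q : pred X) (a w : X -> RR) :
  (forall x, 0 <= a x) -> (forall x, 0 <= w x) -> (forall x, Q x -> 1 <= w x) ->
  \sum_(x | Q x) a x <= \sum_x a x * w x.
Proof.
move=> ha hw hQ.
apply: le_trans (_ : \sum_(x | Q x) a x * w x <= _).
  by apply: ler_sum => x hx; apply: ler_peMr => //; apply: hQ.
rewrite [X in _ <= X](bigID Q) /= lerDl sumr_ge0 // => x _.
exact: mulr_ge0.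
Qed.

Lemma succ_fail (X : finType) (F : X -> RR) (Q : pred X) :
  \sum_x F x = 1 -> \sum_(x | Q x) F x = 1 - \sum_(x | ~~ Q x) F x.
Proof. by move=> h; rewrite -h [in RHS](bigID Q) /=; ring. Qed.

Lemma sum_weight (Y : finType) (P : Y -> RR) y0 (c : RR) :
  \sum_y P y = 1 -> \sum_y P y * c ^+ (y == y0) = 1 + (c - 1) * P y0.
Proof.
move=> h.
rewrite (eq_bigr (fun y => P y + (if y == y0 then (c - 1) * P y else 0))); last first.
  by move=> y _; case: (y == y0) => /=; ring.
by rewrite big_split /= h -big_mkcond big_pred1_eq.
Qed.

Lemma bern (x : RR) m : 0 <= x -> 1 + m%:R * x <= (1 + x) ^+ m.
Proof.
move=> hx; elim: m => [|m IH]; first by rewrite expr0 mul0r addr0.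
rewrite exprS -natr1.
have h0 : 0 <= m%:R * x by rewrite mulr_ge0 // ler0n.
have h1 : 0 <= m%:R :> RR by rewrite ler0n.
nra.
Qed.

Definition Scount (Y : finType) q (y0 : Y) (ys : {ffun 'I_q -> Y}) : nat :=
  \sum_(i < q) (ys i == y0).
Arguments Scount {Y q} y0 ys.

Definition fdec (Y : finType) m (y0 : Y) (ys : {ffun 'I_(8 * m) -> Y}) : bool :=
  (m <= Scount y0 ys)%N.
Arguments fdec {Y} m y0 ys.

Lemma weightE (Y : finType) q (y0 : Y) (P : Y -> RR) (c : RR) (ys : {ffun 'I_q -> Y}) :
  \prod_i P (ys i) * c ^+ Scount y0 ys = \prod_i (P (ys i) * c ^+ (ys i == y0)).
Proof. by rewrite big_split /= /Scount prodrXr. Qed.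

Lemma failB (Y : finType) m (P : Y -> RR) y0 :
  (forall y, 0 <= P y) -> \sum_y P y = 1 -> P y0 <= 1/32 ->
  \sum_(ys | fdec m y0 ys) \prod_i P (ys i) <= (2/3) ^+ m.
Proof.
move=> hP h1 hp.
apply: le_trans (markov _ (fdec m y0) (fun ys => \prod_i P (ys i))
   (fun ys => 2 ^+ Scount y0 ys / 2 ^+ m) _ _ _) _.
- by move=> ys; apply: prodr_ge0.
- by move=> ys; apply: divr_ge0; apply: exprn_ge0.
- move=> ys hf; rewrite ler_pdivlMr ?exprn_gt0 // mul1r.
  have h12 : 1 < 2 :> RR by lra.
  by rewrite (ler_eXn2l h12).
under eq_bigr => ys _ do rewrite mulrA weightE.
rewrite -mulr_suml (prod_sum _ _ (fun y => P y * 2 ^+ (y == y0))) sum_weight // exprM.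
have hp0 := hP y0.
set u := 1 + (2 - 1) * P y0.
have hu0 : 0 <= u by rewrite /u; lra.
have hu : u ^+ 8 <= (33/32) ^+ 8.
  by apply: lerXn2r; rewrite ?nnegrE //; rewrite /u; lra.
rewrite -expr_div_n.
apply: lerXn2r; rewrite ?nnegrE.
- by apply: divr_ge0; [apply: exprn_ge0 | lra].
- lra.
- have hc : (33/32 : RR) ^+ 8 <= 4/3 by rewrite !exprS expr0; lra.
  lra.
Qed.
Lemma P_le1 (Y : finType) (P : Y -> RR) y0 :
  (forall y, 0 <= P y) -> \sum_y P y = 1 -> P y0 <= 1.
Proof.
move=> hP h; rewrite -h (bigD1 y0) //= lerDl sumr_ge0 //.
Qed.

Lemma failA (Y : finType) m (P : Y -> RR) y0 :
  (forall y, 0 <= P y) -> \sum_y P y = 1 -> 9/32 <= P y0 ->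
  \sum_(ys | ~~ fdec m y0 ys) \prod_i P (ys i) <= (2/3) ^+ m.
Proof.
move=> hP h1 hp.
have hp1 := P_le1 _ P y0 hP h1.
apply: le_trans (markov _ (fun ys => ~~ fdec m y0 ys) (fun ys => \prod_i P (ys i))
   (fun ys => 2 ^+ m * (2^-1) ^+ Scount y0 ys) _ _ _) _.
- by move=> ys; apply: prodr_ge0.
- by move=> ys; apply: mulr_ge0; apply: exprn_ge0; lra.
- move=> ys; rewrite /fdec -ltnNge => hf.
  rewrite exprVn -[X in X <= _](@divff _ (2 ^+ Scount y0 ys)); last first.
    by rewrite expf_neq0 //; lra.
  rewrite ler_pM2r; last by rewrite invr_gt0 exprn_gt0 //; lra.
  have h12 : 1 < 2 :> RR by lra.
  rewrite (ler_eXn2l h12); lia.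
under eq_bigr => ys _ do rewrite mulrCA weightE.
rewrite -mulr_sumr (prod_sum _ _ (fun y => P y * (2^-1) ^+ (y == y0))) sum_weight // exprM.
set u := 1 + (2^-1 - 1) * P y0.
have hu0 : 0 <= u by rewrite /u; lra.
have hu : u ^+ 8 <= (55/64) ^+ 8.
  by apply: lerXn2r; rewrite ?nnegrE //; rewrite /u; lra.
rewrite -exprMn_comm; last exact: mulrC.
apply: lerXn2r; rewrite ?nnegrE.
- by apply: mulr_ge0; [lra | apply: exprn_ge0].
- lra.
- have hc : (55/64 : RR) ^+ 8 <= 1/3 by rewrite !exprS expr0; lra.
  lra.
Qed.
Lemma geo_small (d : RR) : 0 < d -> exists m : nat, (2/3) ^+ m <= d.
Proof.
move=> hd.
have h0 : 0 <= 2 / d by apply: divr_ge0; lra.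
have [m hm] : exists m : nat, 2 / d < m%:R.
  by exists (Num.Def.archi_bound (2 / d)); exact: archi_boundP.
exists m.
have hb := bern (1/2) m ltac:(lra).
have hX : (2/3 : RR) ^+ m * (1 + 1/2) ^+ m = 1.
  rewrite -exprMn_comm; last exact: mulrC.
  by rewrite (_ : 2/3 * (1 + 1/2) = 1 :> RR) ?expr1n //; field.
have hY : 0 <= (2/3 : RR) ^+ m by apply: exprn_ge0; lra.
have hmd : 2 < m%:R * d by move: hm; rewrite ltr_pdivrMr.
set X := (1 + 1/2) ^+ m in hX hb; set Y := (2/3) ^+ m in hX hY *.
have h2 : (1 + m%:R * (1/2)) * d <= X * d by rewrite ler_pM2r.
have h3 : (1 + m%:R * (1/2)) * d = d + (m%:R * d)/2 by ring.
set md := m%:R * d in hmd h3.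
have h4 : 1 <= X * d by lra.
apply: le_trans (_ : Y <= Y * (X * d)) _; first exact: ler_peMr.
by rewrite mulrA hX mul1r.
Qed.

Lemma Ndim_gt0 n : (0 < Ndim n)%N.
Proof. by rewrite /Ndim expn_gt0. Qed.

Lemma unitary1 n : unitary (Ndim n) 1%:M.
Proof.
rewrite /unitary mul1mx; apply/matrixP => i j; rewrite !mxE.
rewrite eq_sym; case: (i == j) => /=; apply/eqP; rewrite eq_complex /= ?oppr0 ?eqxx //.
Qed.

Lemma P_ge0 n z y : 0 <= outcome_prob n 1 z y.
Proof. by rewrite outcome_probE sqr_ge0. Qed.

Theorem claim2 :
  forall delta : RR, 0 < delta ->
  exists q : nat,
  forall n : nat, (2 <= n)%N ->
  exists V : 'M[CC]_(Ndim n), unitary (Ndim n) V /\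
  exists f : {ffun 'I_q -> 'I_(Ndim n)} -> bool,
  forall z : {ffun 'I_(Ndim n) -> bool}, z \in hadC n ->
    1 - delta <= success_prob n q V f z (z \in hadA n).
Proof.
move=> d hd; have [m hm] := geo_small d hd.
exists (8 * m)%N => n hn.
have hn1 : (1 <= n)%N by lia.
exists 1%:M; split; first exact: unitary1.
set i0 : 'I_(Ndim n) := Ordinal (Ndim_gt0 n).
exists (fdec m i0) => z hz.
set P := outcome_prob n 1 z.
have hP : forall y, 0 <= P y by move=> y; apply: P_ge0.
have h1 : \sum_y P y = 1 by apply: total_prob.
have htot : \sum_(ys : {ffun 'I_(8 * m) -> 'I_(Ndim n)}) \prod_i P (ys i) = 1.
  by rewrite prod_sum h1 expr1n.
rewrite /success_prob -/P.
case hA: (z \in hadA n).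
  rewrite (eq_bigl (fun ys => fdec m i0 ys)); last by move=> ys; rewrite eqb_id.
  rewrite (succ_fail _ _ _ htot).
  have := failA _ m P i0 hP h1 (probA n z i0 hn1 erefl hA).
  lra.
have hB : z \in hadB n by move: hz; rewrite /hadC inE hA.
rewrite (eq_bigl (fun ys => ~~ fdec m i0 ys)); last by move=> ys; rewrite eqbF_neg.
rewrite (succ_fail _ _ _ htot).
rewrite (eq_bigl (fun ys => fdec m i0 ys)); last by move=> ys; rewrite negbK.
have := failB _ m P i0 hP h1 (probB n z i0 hn1 erefl hB).
lra.
Qed.
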